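(* For every integer $n\ge 3$, $$f(n,\mathcal{B}(2K_2))=2^n-\binom{n}{2}-n-1.$$
   Context: $2K_2$ is the graph consisting of two disjoint edges. For a graph $G$, a hypergraph $H$ is a Berge-$G$ hypergraph if there are an injective map $\phi:V(G)\to V(H)$ and pairwise distinct hyperedges $e_{xy}\in E(H)$, one for each $xy\in E(G)$, with $\phi(x),\phi(y)\in e_{xy}$. $\mathcal{B}(G)$ denotes the family of all Berge-$G$ hypergraphs. For a positive integer $n$ and a graph $G$, $f(n,\mathcal{B}(G))$ is the smallest number of colors in a coloring of all subsets of $[n]=\{1,\dots,n\}$ (i.e. of $2^{[n]}$) such that there is no monochromatic Berge-$G$ hypergraph, i.e. no color class, viewed as a (non-uniform) hypergraph on $[n]$, contains a Berge-$G$ subhypergraph. *)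

(* Defs.v *)
From mathcomp Require Import all_boot.
Set Implicit Arguments. Unset Strict Implicit. Unset Printing Implicit Defensive.

(* H contains a Berge-2K2: 2K2 has vertices x1,y1,x2,y2 and edges x1y1, x2y2;
   an injective map = four pairwise distinct vertices of [n], and two
   distinct hyperedges e1 (containing x1,y1) and e2 (containing x2,y2). *)
Definition has_berge_2K2 (n : nat) (H : {set {set 'I_n}}) : Prop :=
  exists (x1 y1 x2 y2 : 'I_n) (e1 e2 : {set 'I_n}),
    [/\ uniq [:: x1; y1; x2; y2], e1 \in H, e2 \in H, e1 != e2 &
        [/\ x1 \in e1, y1 \in e1, x2 \in e2 & y2 \in e2]].

Definition good_coloring (n c : nat) (col : {set 'I_n} -> 'I_c) : Prop :=
  forall i : 'I_c, ~ has_berge_2K2 [set S : {set 'I_n} | col S == i].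

Definition colorable_no_berge_2K2 (n c : nat) : Prop :=
  exists col : {set 'I_n} -> 'I_c, good_coloring col.

(* Main.v *)
Require Import Defs.
From mathcomp Require Import all_boot zify.
Set Implicit Arguments. Unset Strict Implicit.

Lemma le_step (T : finType) k :
  #|[set S : {set T} | #|S| <= k.+1]| = #|[set S : {set T} | #|S| <= k]| + 'C(#|T|, k.+1).
Proof.
rewrite -card_draws.
have -> : [set S : {set T} | #|S| <= k.+1] =
  [set S : {set T} | #|S| <= k] :|: [set S : {set T} | #|S| == k.+1].
  by apply/setP => S; rewrite !inE leq_eqVlt ltnS orbC.
rewrite cardsU.
have -> : [set S : {set T} | #|S| <= k] :&: [set S : {set T} | #|S| == k.+1] = set0.
  apply/setP => S; rewrite !inE; apply/negbTE/andP => -[h1 /eqP h2]; lia.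
by rewrite cards0 subn0.
Qed.

Lemma count_big n : #|[set S : {set 'I_n} | 3 <= #|S|]| + (1 + n + 'C(n, 2)) = 2 ^ n.
Proof.
have h0 : #|[set S : {set 'I_n} | #|S| <= 0]| = 1.
  rewrite -(bin0 #|'I_n|) -(card_draws 'I_n 0).
  by apply: eq_card => S; rewrite !inE leqn0.
have h2 := le_step 'I_n 1. rewrite (le_step 'I_n 0) h0 card_ord bin1 in h2.
have := cardsC [set S : {set 'I_n} | 3 <= #|S|].
have -> : ~: [set S : {set 'I_n} | 3 <= #|S|] = [set S : {set 'I_n} | #|S| <= 2].
  by apply/setP => S; rewrite !inE -ltnNge.
rewrite h2 -cardsT -powersetT card_powerset cardsT card_ord => <-.
by rewrite addnA.
Qed.

Lemma berge_of (n : nat) (H : {set {set 'I_n}}) (S1 S2 : {set 'I_n}) (b : 'I_n) :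
  S1 \in H -> S2 \in H -> 3 <= #|S1| -> 3 <= #|S2| -> b \in S2 -> b \notin S1 ->
  has_berge_2K2 H.
Proof.
move=> h1 h2 c1 c2 bS2 bS1.
have : 0 < #|S2 :\ b| by move: c2; rewrite (cardsD1 b) bS2 add1n ltnS => h; apply: leq_trans h.
case/card_gt0P => u; rewrite !inE => /andP[ub uS2].
have : 1 < #|S1 :\ u| by move: c1; rewrite (cardsD1 u); case: (u \in S1); rewrite ?add1n ?add0n; lia.
case/card_gt1P => x [y [/setD1P[xu xS1] /setD1P[yu yS1] xy]].
exists x, y, b, u, S1, S2; split => //=.
- rewrite !inE !negb_or xy xu yu (eq_sym b u) ub /= !andbT.
  by apply/andP; split; apply: contraNneq bS1 => <-.
- by apply: contraNneq bS1 => ->.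
Qed.

Lemma berge_big (n : nat) (H : {set {set 'I_n}}) (S1 S2 : {set 'I_n}) :
  S1 \in H -> S2 \in H -> 3 <= #|S1| -> 3 <= #|S2| -> S1 != S2 -> has_berge_2K2 H.
Proof.
move=> h1 h2 c1 c2 ne.
case: (boolP (S2 \subset S1)) => sub.
  have : ~~ (S1 \subset S2).
    by apply: contraNN ne => s; apply/eqP/eqP; rewrite eqEsubset s sub.
  case/subsetPn => b bS1 bS2.
  exact: (berge_of h2 h1 c2 c1 bS1 bS2).
case/subsetPn: sub => b bS2 bS1.
exact: (berge_of h1 h2 c1 c2 bS2 bS1).
Qed.

Definition gS (n : nat) (S : {set 'I_n}) : {set 'I_n} :=
  if 3 <= #|S| then S else if #|S| == 2 then
    (match [pick z in ~: S] with Some z => z |: S | None => S end)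
  else [set: 'I_n].

Lemma gS_prop n (S : {set 'I_n}) : 3 <= n ->
  [/\ 3 <= #|gS S|, 3 <= #|S| -> gS S = S,
      #|S| = 2 -> #|gS S| = 3 & 2 <= #|S| -> S \subset gS S].
Proof.
move=> hn; rewrite /gS.
case: ifP => h3.
  by split => // h; move: h3; rewrite h.
case: ifP => [/eqP h2|h2].
  case: pickP => [z zS|none].
    have hc : #|z |: S| = 3 by rewrite cardsU1 h2; move: zS; rewrite inE => ->.
    by rewrite hc; split => // _; apply: subsetUr.
  have := cardsC S; rewrite h2 card_ord.
  have -> : #|~: S| = 0 by apply: eq_card0 => z; rewrite none.
  lia.
split; first by rewrite cardsT card_ord.
- by move=> h; rewrite h in h3.
- by move=> h; rewrite h in h2.
- by move=> _; apply: subsetT.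
Qed.

Theorem theorem3 (n : nat) (hn : 3 <= n) :
  colorable_no_berge_2K2 n (2 ^ n - 'C(n, 2) - n - 1) /\
  (forall c : nat, colorable_no_berge_2K2 n c -> 2 ^ n - 'C(n, 2) - n - 1 <= c).
Proof.
set B := [set S : {set 'I_n} | 3 <= #|S|].
have hB : 2 ^ n - 'C(n, 2) - n - 1 = #|B|.
  have := count_big n; rewrite -/B; lia.
rewrite hB; clear hB; split.
  have x0 : [set: 'I_n] \in B by rewrite inE cardsT card_ord.
  exists (fun S => enum_rank_in x0 (gS S)) => i [x1 [y1 [x2 [y2 [e1 [e2 [u h1 h2 ne [a1 b1 a2 b2]]]]]]]].
  move: h1 h2; rewrite !inE => /eqP c1 /eqP c2.
  have gB : forall S, gS S \in B by move=> S; rewrite inE; case: (gS_prop S hn).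
  have eqg : gS e1 = gS e2.
    rewrite -(enum_rankK_in x0 (gB e1)) -(enum_rankK_in x0 (gB e2)).
    by rewrite c1 c2.
  move: u => /=; rewrite !inE !negb_or => /and4P[/and3P[n1 n2 n3] /andP[n4 n5] n6 _].
  have d1 : 1 < #|e1| by apply/card_gt1P; exists x1, y1.
  have d2 : 1 < #|e2| by apply/card_gt1P; exists x2, y2.
  have [g1 g1e _ s1] := gS_prop e1 hn.
  have [g2 g2e _ s2] := gS_prop e2 hn.
  have [t3 sub1 sub2] : [/\ #|gS e1| = 3, e1 \subset gS e1 & e2 \subset gS e1].
    split; [|exact: s1 d1|by rewrite eqg; exact: s2 d2].
    case: (leqP 3 #|e1|) => h1.
      case: (leqP 3 #|e2|) => h2.
        by case/eqP: ne; rewrite -(g1e h1) -(g2e h2).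
      have k2 : #|e2| = 2 by apply/eqP; rewrite eqn_leq -ltnS h2 d2.
      by rewrite eqg; case: (gS_prop e2 hn) => _ _ ->.
    have k1 : #|e1| = 2 by apply/eqP; rewrite eqn_leq -ltnS h1 d1.
    by case: (gS_prop e1 hn) => _ _ ->.
  have : size [:: x1; y1; x2; y2] <= size (enum (gS e1)).
    apply: uniq_leq_size.
      by rewrite /= !inE !negb_or n1 n2 n3 n4 n5 n6.
    move=> z; rewrite mem_enum !inE => /or4P[] /eqP ->.
    - exact: (subsetP sub1).
    - exact: (subsetP sub1).
    - exact: (subsetP sub2).
    - exact: (subsetP sub2).
  by rewrite -cardE t3.
move=> c [col good].
have inj : {in B &, injective col}.
  move=> S1 S2; rewrite !inE => h1 h2 e; apply/eqP; apply/negPn/negP => ne.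
  apply: (good (col S1)).
  by apply: (berge_big (S1 := S1) (S2 := S2)); rewrite ?inE ?e.
by have := @leq_card_in _ _ col B inj; rewrite card_ord.
Qed.
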